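(* Let $r\ge 2$ and $n\ge1$ be integers, and for $k=0,1,\dots,n$ let $\boldsymbol{\lambda}_k=((n-k);(1^k);\emptyset;\dots;\emptyset)$. Then the number of standard $\boldsymbol{\lambda}_k$-tableaux is $\binom{n}{k}$, and every standard $\boldsymbol{\lambda}_k$-tableau has exactly $k$ descents.
   Context: An $r$-multipartition $\boldsymbol{\lambda}=(\lambda^{(0)};\dots;\lambda^{(r-1)})$ of $n$ is an $r$-tuple of partitions of total size $n$; here $\boldsymbol\lambda_k$ has a one-row component $(n-k)$ in position $0$, a one-column component $(1^k)$ in position $1$, and empty components otherwise. A standard $\boldsymbol{\lambda}$-tableau fills the boxes of all components with $1,\dots,n$, each once, increasing along rows and down columns in each component. An integer $i\in\{1,\dots,n-1\}$ is a descent of $\mathrm{T}$ if, with $i$ in row $a$ of component $c$ and $i+1$ in row $x$ of component $z$, either $c=z$ and $a<x$, or $c>z$; $n$ is a descent iff $n$ lies in a component $c>0$. *)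

(* Defs.v *)
From mathcomp Require Import all_boot.
Set Implicit Arguments. Unset Strict Implicit. Unset Printing Implicit Defensive.

(* An r-multipartition: a partition (list of row lengths, top row first)
   for each component c : 'I_r. *)
Definition multipartition (r : nat) := 'I_r -> seq nat.

(* A box (c, a, b): component c, row a, column b (rows/columns 0-indexed).
   For a multipartition of n every row and column index is < n. *)
Definition box (r n : nat) := ('I_r * 'I_n * 'I_n)%type.
Definition bcomp r n (x : box r n) : nat := x.1.1.
Definition brow  r n (x : box r n) : nat := x.1.2.
Definition bcol  r n (x : box r n) : nat := x.2.

Definition in_diagram r n (lam : multipartition r) (x : box r n) : bool :=
  bcol x < nth 0 (lam x.1.1) (brow x).

(* A tableau of size n: entry i : 'I_n stands for the integer i+1,
   and T i is the box it occupies. *)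
Definition tableau (r n : nat) := {ffun 'I_n -> box r n}.

Definition standard r n (lam : multipartition r) (T : tableau r n) : bool :=
  [&& injectiveb T,
      [forall i, in_diagram lam (T i)],
      [forall x : box r n, in_diagram lam x ==> [exists i, T i == x]],
      [forall i, forall j,
         ((bcomp (T i) == bcomp (T j)) && (brow (T i) == brow (T j))
            && (bcol (T i) < bcol (T j))) ==> (i < j)] &
      [forall i, forall j,
         ((bcomp (T i) == bcomp (T j)) && (bcol (T i) == bcol (T j))
            && (brow (T i) < brow (T j))) ==> (i < j)]].

Definition desc_pair r n (x y : box r n) : bool :=
  ((bcomp x == bcomp y) && (brow x < brow y)) || (bcomp y < bcomp x).

Definition is_descent r n (T : tableau r n) (i : 'I_n) : bool :=
  [exists j : 'I_n, (val j == i.+1) && desc_pair (T i) (T j)]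
  || ((i.+1 == n) && (0 < bcomp (T i))).

Definition descents r n (T : tableau r n) : {set 'I_n} :=
  [set i | is_descent T i].

Definition lamk (r n k : nat) : multipartition r :=
  fun c => if val c == 0 then [:: n - k]
           else if val c == 1 then nseq k 1 else [::].
Arguments lamk : clear implicits.

(* Main.v *)
Require Import Defs.
From mathcomp Require Import all_boot.
Set Implicit Arguments. Unset Strict Implicit. Unset Printing Implicit Defensive.

Lemma card_lt_ord n m : m <= n -> #|[set a : 'I_n | a < m]| = m.
Proof.
move=> H; rewrite -[RHS]card_ord -(card_imset _ (f := widen_ord H) (fun a b e => val_inj (congr1 val e : val a = val b))).
apply: eq_card => a; rewrite inE; apply/idP/imsetP => [lt|[b _ ->]] //.
by exists (Ordinal lt) => //; apply: val_inj.
exact: (ltn_ord b).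
Qed.

Lemma card_by_image n (A : {set 'I_n}) (h : 'I_n -> 'I_n) m : m <= n ->
  {in A &, injective h} -> (forall i, i \in A -> h i < m) ->
  (forall a : 'I_n, a < m -> exists2 i, i \in A & h i = a) -> #|A| = m.
Proof.
move=> H inj hlt hsur; rewrite -(card_in_imset inj) -[RHS](@card_lt_ord n m H).
apply: eq_card => a; rewrite inE; apply/imsetP/idP => [[i iA ->]|am].
  exact: hlt.
by have [i iA e] := hsur a am; exists i.
Qed.

Lemma mono_inj n (A : {set 'I_n}) (h : 'I_n -> 'I_n) :
  {in A &, forall i j : 'I_n, i < j -> h i < h j} -> {in A &, injective h}.
Proof.
move=> mono i j iA jA e; apply/val_inj/eqP.
case: (ltngtP i j) => // lt.
  by have := mono _ _ iA jA lt; rewrite e ltnn.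
by have := mono _ _ jA iA lt; rewrite e ltnn.
Qed.

Lemma rank_lemma n (P : {set 'I_n}) (h : 'I_n -> 'I_n) :
  {in P &, forall i j : 'I_n, i < j -> h i < h j} ->
  (forall i (a : 'I_n), i \in P -> a < h i -> exists2 j, j \in P & h j = a) ->
  forall i, i \in P -> val (h i) = #|[set j in P | j < i]|.
Proof.
move=> mono sur i iP; symmetry; apply: (@card_by_image _ _ h).
- exact: ltnW (ltn_ord _).
- move=> j1 j2; rewrite !inE => /andP[j1P _] /andP[j2P _].
  exact: (mono_inj mono j1P j2P).
- by move=> j; rewrite inE => /andP[jP lt]; apply: mono.
move=> a lt; have [j jP e] := sur i a iP lt; exists j => //.
rewrite inE jP /=; case: (ltngtP j i) => // [gt|eq].
  by have := mono _ _ iP jP gt; rewrite e => /(ltn_trans lt); rewrite ltnn.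
by move: lt; rewrite -e (_ : j = i) ?ltnn //; apply: val_inj.
Qed.

Definition rk n (A : {set 'I_n}) (i : 'I_n) := #|[set j in A | j < i]|.

Lemma rk_le n (A : {set 'I_n}) (i : 'I_n) : rk A i <= i.
Proof.
rewrite /rk -{2}(@card_lt_ord n i (ltnW (ltn_ord i))).
by apply: subset_leq_card; apply/subsetP => j; rewrite !inE => /andP[].
Qed.

Lemma rk_mono_lt n (A : {set 'I_n}) (i j : 'I_n) : i \in A -> i < j -> rk A i < rk A j.
Proof.
move=> iA lt; apply: proper_card; apply/properP; split.
  by apply/subsetP => x; rewrite !inE => /andP[-> /ltn_trans ->].
by exists i; rewrite !inE ?iA ?lt // ltnn andbF.
Qed.

Lemma rk_mono_le n (A : {set 'I_n}) (i j : 'I_n) : i <= j -> rk A i <= rk A j.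
Proof.
move=> le; apply: subset_leq_card.
by apply/subsetP => x; rewrite !inE => /andP[-> /leq_trans ->].
Qed.

Lemma rk_lt_card n (A : {set 'I_n}) (i : 'I_n) : i \in A -> rk A i < #|A|.
Proof.
move=> iA; apply: proper_card; apply/properP; split.
  by apply/subsetP => x; rewrite !inE => /andP[].
by exists i; rewrite ?inE ?iA // ltnn andbF.
Qed.

Definition rkO n (A : {set 'I_n}) (i : 'I_n) : 'I_n := insubd i (rk A i).

Lemma val_rkO n (A : {set 'I_n}) (i : 'I_n) : val (rkO A i) = rk A i.
Proof. by rewrite val_insubd (leq_ltn_trans (rk_le A i) (ltn_ord i)). Qed.

Definition zO n (i : 'I_n) : 'I_n := insubd i 0.
Lemma val_zO n (i : 'I_n) : val (zO i) = 0.
Proof. by rewrite val_insubd (leq_ltn_trans (leq0n i) (ltn_ord i)). Qed.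

Lemma rk_sur n (A : {set 'I_n}) (a : 'I_n) : a < #|A| ->
  exists2 i, i \in A & rk A i = a.
Proof.
move=> lt.
have inj : {in A &, injective (rkO A)}.
  apply: mono_inj => i j iA _ ij; rewrite !val_rkO; exact: rk_mono_lt.
have sub : rkO A @: A \subset [set b : 'I_n | b < #|A|].
  by apply/subsetP => b /imsetP[i iA ->]; rewrite inE val_rkO rk_lt_card.
have : rkO A @: A == [set b : 'I_n | b < #|A|].
  rewrite eqEcard sub card_in_imset // card_lt_ord ?leqnn //.
  by rewrite -[X in _ <= X](card_ord n) max_card.
move/eqP/setP/(_ a); rewrite inE lt => /imsetP[i iA e].
by exists i => //; rewrite -val_rkO -e.
Qed.

Lemma diagP r n k (x : box r n) : in_diagram (lamk r n k) x =
  ((val x.1.1 == 0) && (val x.1.2 == 0) && (val x.2 < n - k)) ||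
  ((val x.1.1 == 1) && (val x.1.2 < k) && (val x.2 == 0)).
Proof.
case: x => [[c a] b]; rewrite /in_diagram /lamk /=.
case: c => [[|[|c]] hc] /=; case: a => [[|a] ha] /=.
all: rewrite ?nth_nil ?nth_nseq ?andbF ?orbF //=.
all: rewrite /bcol /brow /=; case: ifP => _; rewrite ?andbF ?andbT //.
all: by case: b => [[|b] ?].
Qed.

Definition gT r n (c0 c1 : 'I_r) (S : {set 'I_n}) : tableau r n :=
  [ffun i => if i \in S then (c1, rkO S i, zO i) else (c0, zO i, rkO (~: S) i)].

Definition fS r n (T : tableau r n) : {set 'I_n} := [set i | bcomp (T i) == 1].

Lemma boxeq r n (x y : box r n) :
  bcomp x = bcomp y -> brow x = brow y -> bcol x = bcol y -> x = y.
Proof.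
by case: x => [[c a] b]; case: y => [[c' a'] b']; rewrite /bcomp /brow /bcol /=
  => /val_inj -> /val_inj -> /val_inj ->.
Qed.

Lemma std_facts r n k (T : tableau r n) : standard (lamk r n k) T ->
  [/\ injective T, forall i, in_diagram (lamk r n k) (T i),
      forall x, in_diagram (lamk r n k) x -> exists i, T i = x,
      forall i j, bcomp (T i) = bcomp (T j) -> brow (T i) = brow (T j) -> i < j ->
         bcol (T i) < bcol (T j) &
      forall i j, bcomp (T i) = bcomp (T j) -> bcol (T i) = bcol (T j) -> i < j ->
         brow (T i) < brow (T j)].
Proof.
case/and5P => /injectiveP inj /forallP dg /forallP cov /forallP ri /forallP ci.
split => //.
- by move=> x /(implyP (cov x)) /existsP [i /eqP e]; exists i.
- move=> i j ec er lt; case: (ltngtP (bcol (T i)) (bcol (T j))) => // [gt|eq].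
    by have := implyP (forallP (ri j) i); rewrite ec er !eqxx gt ltnNge (ltnW lt) => /(_ isT).
  by have := inj i j (boxeq ec er eq) => e; move: lt; rewrite e ltnn.
- move=> i j ec er lt; case: (ltngtP (brow (T i)) (brow (T j))) => // [gt|eq].
    by have := implyP (forallP (ci j) i); rewrite ec er !eqxx gt ltnNge (ltnW lt) => /(_ isT).
  by have := inj i j (boxeq ec eq er) => e; move: lt; rewrite e ltnn.
Qed.

Lemma comp_cases r n k (x : box r n) : in_diagram (lamk r n k) x ->
  (bcomp x = 0 /\ brow x = 0 /\ bcol x < n - k) \/
  (bcomp x = 1 /\ brow x < k /\ bcol x = 0).
Proof.
rewrite diagP => /orP[/andP[/andP[/eqP a /eqP b] c]|/andP[/andP[/eqP a b] /eqP c]].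
  by left.
by right.
Qed.

Lemma row0 r n k (x : box r n) : in_diagram (lamk r n k) x -> bcomp x = 0 -> brow x = 0.
Proof. by case/comp_cases => [[_ [-> _]]|[-> _]]. Qed.

Lemma col0 r n k (x : box r n) : in_diagram (lamk r n k) x -> bcomp x = 1 -> bcol x = 0.
Proof. by case/comp_cases => [[-> _]|[_ [_ ->]]]. Qed.

Lemma partA r n k (c0 c1 : 'I_r) (h0 : val c0 = 0) (h1 : val c1 = 1)
  (T : tableau r n) : standard (lamk r n k) T -> T = gT c0 c1 (fS T).
Proof.
move=> st; have [inj dg cov rmono cmono] := std_facts st.
have nS j : (j \in ~: fS T) = (bcomp (T j) == 0).
  rewrite !inE; case: (comp_cases (dg j)) => [[-> _]|[-> _]] //.
apply/ffunP => i; rewrite ffunE.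
case: (comp_cases (dg i)) => [[ci [ri coli]] | [ci [ri coli]]].
- have iS : i \notin fS T by rewrite inE ci.
  rewrite (negbTE iS); apply: boxeq; rewrite /bcomp /brow /bcol /= ?h0 ?val_zO ?val_rkO //.
  rewrite /rk -(@rank_lemma _ _ (fun j => (T j).2)) //.
  + move=> j1 j2; rewrite !nS => /eqP c1' /eqP c2' lt; apply: rmono => //.
      by rewrite c1' c2'.
    by rewrite (row0 (dg j1) c1') (row0 (dg j2) c2').
  + move=> j a; rewrite nS => /eqP cj lt.
    have dx : in_diagram (lamk r n k) (c0, zO i, a).
      rewrite diagP /= h0 val_zO /=; case: (comp_cases (dg j)) => [[_ [_ e]]|[e _]].
        by rewrite (ltn_trans lt e).
      by rewrite cj in e.
    have [j' e] := cov _ dx; exists j'; first by rewrite nS e /bcomp /= h0.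
    by rewrite e.
  + by rewrite nS; apply/eqP.
- have iS : i \in fS T by rewrite inE ci.
  rewrite iS; apply: boxeq; rewrite /bcomp /brow /bcol /= ?h1 ?val_zO ?val_rkO //.
  rewrite /rk -(@rank_lemma _ _ (fun j => (T j).1.2)) //.
  + move=> j1 j2; rewrite !inE => /eqP c1' /eqP c2' lt; apply: cmono => //.
      by rewrite c1' c2'.
    by rewrite (col0 (dg j1) c1') (col0 (dg j2) c2').
  + move=> j a; rewrite inE => /eqP cj lt.
    have dx : in_diagram (lamk r n k) (c1, a, zO i).
      rewrite diagP /= h1 val_zO /=; case: (comp_cases (dg j)) => [[e _]|[_ [e _]]].
        by rewrite cj in e.
      by rewrite (ltn_trans lt e).
    have [j' e] := cov _ dx; exists j'; first by rewrite inE e /bcomp /= h1.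
    by rewrite e.
Qed.

Lemma card_fS r n k (c1 : 'I_r) (h1 : val c1 = 1) (T : tableau r n) : k <= n ->
  standard (lamk r n k) T -> #|fS T| = k.
Proof.
move=> kn st; have [inj dg cov rmono cmono] := std_facts st.
apply: (@card_by_image _ _ (fun j => (T j).1.2)) => //.
- apply: mono_inj => j1 j2; rewrite !inE => /eqP c1' /eqP c2' lt; apply: cmono => //.
    by rewrite c1' c2'.
  by rewrite (col0 (dg j1) c1') (col0 (dg j2) c2').
- move=> j; rewrite inE => /eqP cj.
  by case: (comp_cases (dg j)) => [[e _]|[_ [e _]]] //; rewrite cj in e.
- move=> a lt; have [j0 _] : exists j0 : 'I_n, True.
    by case: n a {lt kn T st inj dg cov rmono cmono} => [[]|n'] // _; exists ord0.
  have dx : in_diagram (lamk r n k) (c1, a, zO j0) by rewrite diagP /= h1 val_zO lt.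
  have [j' e] := cov _ dx; exists j'; first by rewrite inE e /bcomp /= h1.
  by rewrite e.
Qed.

Lemma descents_fS r n k (T : tableau r n) :
  standard (lamk r n k) T -> descents T = fS T.
Proof.
move=> st; have [inj dg cov rmono cmono] := std_facts st.
apply/setP => i; rewrite !inE /is_descent.
have cc j : (bcomp (T j) == 0) || (bcomp (T j) == 1).
  by case: (comp_cases (dg j)) => [[-> _]|[-> _]].
case: (ltnP i.+1 n) => [lt|ge].
- rewrite (ltn_eqF lt) orbF.
  have -> : [exists j : 'I_n, (val j == i.+1) && desc_pair (T i) (T j)] =
            desc_pair (T i) (T (Ordinal lt)).
    apply/existsP/idP => [[j /andP[/eqP e d]]|d].
      by rewrite (_ : Ordinal lt = j) //; apply: val_inj.
    by exists (Ordinal lt); rewrite eqxx.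
  rewrite /desc_pair.
  have lij : i < Ordinal lt by rewrite /= ltnSn.
  case/orP: (cc i) => /eqP ci; case/orP: (cc (Ordinal lt)) => /eqP cj; rewrite ci cj //=.
  + by rewrite (row0 (dg i) ci) (row0 (dg _) cj).
  + rewrite ltnn orbF eqxx /=; apply: cmono => //; first by rewrite ci cj.
    by rewrite (col0 (dg i) ci) (col0 (dg _) cj).
- have -> : i.+1 = n by apply/eqP; rewrite eqn_leq ge ltn_ord.
  rewrite eqxx /=.
  have -> : [exists j : 'I_n, (val j == n) && desc_pair (T i) (T j)] = false.
    by apply/existsP => [[j /andP[/eqP e _]]]; move: (ltn_ord j); rewrite e ltnn.
  by case/orP: (cc i) => /eqP ->.
Qed.

Lemma rk_rev n (A : {set 'I_n}) (i j : 'I_n) : rk A i < rk A j -> i < j.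
Proof. by move=> lt; rewrite ltnNge; apply/negP => /(rk_mono_le A); rewrite leqNgt lt. Qed.

Lemma fS_gT r n (c0 c1 : 'I_r) (h0 : val c0 = 0) (h1 : val c1 = 1) (S : {set 'I_n}) :
  fS (gT c0 c1 S) = S.
Proof.
apply/setP => i; rewrite inE ffunE; case: ifP => iS; rewrite /bcomp /= ?h0 ?h1 //.
Qed.

Lemma partB r n k (c0 c1 : 'I_r) (h0 : val c0 = 0) (h1 : val c1 = 1)
  (S : {set 'I_n}) : #|S| = k -> standard (lamk r n k) (gT c0 c1 S).
Proof.
move=> hS.
have hC : #|~: S| = n - k.
  have := cardsC S; rewrite card_ord hS => e.
  by apply/eqP; rewrite -(eqn_add2l k) e subnKC // -e leq_addr.
apply/and5P; split.
- apply/injectiveP => i j; rewrite !ffunE.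
  case: (boolP (i \in S)) => iS; case: (boolP (j \in S)) => jS.
  + move/(congr1 (fun x => x.1.2)) => /= e.
    have mono : {in S &, forall a b : 'I_n, a < b -> rkO S a < rkO S b}.
      by move=> a b aS bS lt; rewrite !val_rkO; exact: rk_mono_lt.
    exact: (mono_inj mono iS jS e).
  + by move/(congr1 (fun x => val x.1.1)) => /=; rewrite h0 h1.
  + by move/(congr1 (fun x => val x.1.1)) => /=; rewrite h0 h1.
  + move/(congr1 (fun x => x.2)) => /= e.
    have mono : {in ~: S &, forall a b : 'I_n, a < b -> rkO (~: S) a < rkO (~: S) b}.
      by move=> a b aS bS lt; rewrite !val_rkO; exact: rk_mono_lt.
    by apply: (mono_inj mono _ _ e); rewrite inE.
- apply/forallP => i; rewrite ffunE diagP; case: ifP => iS /=;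
    rewrite ?h0 ?h1 ?val_zO ?val_rkO /= ?andbT ?orbF.
  + by rewrite -hS rk_lt_card.
  + by rewrite -hC rk_lt_card // inE iS.
- apply/forallP => x; apply/implyP => /comp_cases [[cx [rx colx]]|[cx [rx colx]]].
  + rewrite -hC in colx; have [i iS e] := rk_sur colx.
    apply/existsP; exists i; rewrite ffunE; move: iS; rewrite inE => /negbTE ->.
    by apply/eqP/boxeq; rewrite /bcomp /brow /bcol /= ?h0 ?val_zO ?val_rkO.
  + rewrite -hS in rx; have [i iS e] := rk_sur rx.
    apply/existsP; exists i; rewrite ffunE iS.
    by apply/eqP/boxeq; rewrite /bcomp /brow /bcol /= ?h1 ?val_zO ?val_rkO.
- apply/forallP => i; apply/forallP => j; apply/implyP; rewrite !ffunE.
  case: (boolP (i \in S)) => iS; case: (boolP (j \in S)) => jS;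
    rewrite /bcomp /brow /bcol /= ?h0 ?h1 ?val_zO ?val_rkO ?ltnn ?andbF //=.
  exact: rk_rev.
- apply/forallP => i; apply/forallP => j; apply/implyP; rewrite !ffunE.
  case: (boolP (i \in S)) => iS; case: (boolP (j \in S)) => jS;
    rewrite /bcomp /brow /bcol /= ?h0 ?h1 ?val_zO ?val_rkO ?ltnn ?andbF //=.
  exact: rk_rev.
Qed.

Theorem mainTheorem3 (r n : nat) (hr : 2 <= r) (hn : 1 <= n) (k : nat) (hk : k <= n) :
  #|[set T : tableau r n | standard (lamk r n k) T]| = 'C(n, k) /\
  (forall T : tableau r n, standard (lamk r n k) T -> #|descents T| = k).
Proof.
pose c0 : 'I_r := Ordinal (leq_trans (isT : 0 < 2) hr).
pose c1 : 'I_r := Ordinal hr.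
have h0 : val c0 = 0 by [].
have h1 : val c1 = 1 by [].
split; last first.
  by move=> T st; rewrite (descents_fS st) (card_fS h1 hk st).
have -> : [set T : tableau r n | standard (lamk r n k) T] =
          gT c0 c1 @: [set S : {set 'I_n} | #|S| == k].
  apply/setP => T; rewrite inE; apply/idP/imsetP => [st|[S]].
    exists (fS T); first by rewrite inE (card_fS h1 hk st).
    exact: (partA h0 h1 st).
  by rewrite inE => /eqP hS ->; apply: (partB h0 h1).
rewrite card_in_imset ?card_draws ?card_ord //.
by move=> S1 S2 _ _ e; rewrite -(fS_gT h0 h1 S1) e fS_gT.
Qed.
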